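(* Let $F$ be a functor on small types. Every $F$-algebra $(A,k_A)$ induces an algebra $(TA,k_{TA})$ for the size-indexed functor $F[\Diamond-]$ whose carrier is the constant family $TA:=\lambda i.\,A:\mathsf{Size}\to U$, and this extends to a functor $T$ from $F$-algebras to $F[\Diamond-]$-algebras.
   Context: Ambient theory: an intensional dependent type theory with $\Sigma,\Pi$, identity types, a Tarski-style universe $U$ of small types (decoding implicit), function extensionality; a non-small type $\mathsf{Size}$ with a small mere-proposition strict order $j<i$; for families of small types $A(i)$ over $\mathsf{Size}$ small types $\exists i.A(i)$ (pairs $\langle s,a\rangle$, $a:A(s)$, with a dependent eliminator with definitional computation only into small families) and $\forall i.A(i)$ (size-abstraction and application, $\beta,\eta$); $\exists j<i.A(j):=\exists j.((j<i)\times A(j))$ with the inequality proof suppressed. A functor on small types: $F:U\to U$, $F_{A,B}:(A\to B)\to(FA\to FB)$, with $F(\mathrm{id})=\mathrm{id}$ and $F(g\circ f)=Fg\circ Ff$. An $F$-algebra is $(A,k_A)$ with $A:U$, $k_A:FA\to A$; a morphism $(A,k_A)\to(B,k_B)$ is $h:A\to B$ with a path $h\circ k_A=k_B\circ Fh$. For $X:\mathsf{Size}\to U$, $\Diamond_iX:=\exists j<i.X\,j$; size-indexed maps $X\overset{i}{\to}Y:=\forall i.X\,i\to Y\,i$; for $f:X\overset{i}{\to}Y$, $\Diamond f\,i\,\langle j,a\rangle:=\langle j,f\,j\,a\rangle$. An $F[\Diamond-]$-algebra is $(X,k)$ with $k:\forall i.F(\Diamond_iX)\to X\,i$; a morphism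 $(X,k)\to(Y,l)$ is $h:X\overset{i}{\to}Y$ with a path $h\circ k=l\circ(\lambda i.F(\Diamond h\,i))$, composed pointwise. A functor between these collections of algebras is an assignment on algebras and on morphisms preserving identities and composition up to propositional equality. *)

(* Defs.v *)
From Stdlib Require Import FunctionalExtensionality.

Set Implicit Arguments.

Record Functor := MkFunctor {
  Fo : Type -> Type;
  Fm : forall A B : Type, (A -> B) -> Fo A -> Fo B;
  Fm_id : forall A : Type, Fm (fun x : A => x) = (fun x => x);
  Fm_comp : forall (A B C : Type) (f : A -> B) (g : B -> C),
      Fm (fun x => g (f x)) = (fun x => Fm g (Fm f x))
}.
Arguments Fm f0 {A B} _ _.

Section Alg.
Variable F : Functor.

Record Alg := MkAlg { car : Type; str : Fo F car -> car }.

Record AlgHom (X Y : Alg) := MkAlgHom {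
  hmap : car X -> car Y;
  hcomm : (fun x => hmap (str X x)) = (fun x => str Y (Fm F hmap x))
}.

Lemma alg_id_comm (X : Alg) :
  (fun x => (fun a : car X => a) (str X x)) = (fun x => str X (Fm F (fun a => a) x)).
Proof. rewrite Fm_id. reflexivity. Qed.

Definition alg_id (X : Alg) : AlgHom X X := MkAlgHom X X (fun a => a) (alg_id_comm X).

Lemma alg_comp_comm (X Y Z : Alg) (g : AlgHom Y Z) (f : AlgHom X Y) :
  (fun x => hmap g (hmap f (str X x))) =
  (fun x => str Z (Fm F (fun a => hmap g (hmap f a)) x)).
Proof.
  rewrite Fm_comp.
  apply functional_extensionality; intro x.
  pose proof (f_equal (fun h => h x) (hcomm f)) as Hf; simpl in Hf.
  rewrite Hf.
  pose proof (f_equal (fun h => h (Fm F (hmap f) x)) (hcomm g)) as Hg; simpl in Hg.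
  exact Hg.
Qed.

Definition alg_comp (X Y Z : Alg) (g : AlgHom Y Z) (f : AlgHom X Y) : AlgHom X Z :=
  MkAlgHom X Z (fun a => hmap g (hmap f a)) (alg_comp_comm g f).

Variable Size : Type.
Variable lt : Size -> Size -> Prop.

Definition Diamond (X : Size -> Type) (i : Size) : Type :=
  { j : Size & (lt j i * X j)%type }.

Definition dmap (X Y : Size -> Type) (f : forall i, X i -> Y i) (i : Size)
  (d : Diamond X i) : Diamond Y i :=
  match d with existT _ j (p, a) => existT _ j (p, f j a) end.
Arguments dmap {X Y} f i d.

Record SAlg := MkSAlg {
  scar : Size -> Type;
  sstr : forall i : Size, Fo F (Diamond scar i) -> scar i
}.

Record SAlgHom (X Y : SAlg) := MkSAlgHom {
  shmap : forall i : Size, scar X i -> scar Y i;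
  shcomm : (fun i x => shmap i (sstr X i x)) =
           (fun i x => sstr Y i (Fm F (@dmap (scar X) (scar Y) shmap i) x))
}.

Lemma dmap_id (X : Size -> Type) (i : Size) :
  dmap (fun j (a : X j) => a) i = (fun d => d).
Proof. apply functional_extensionality; intros [j [p a]]; reflexivity. Qed.

Lemma dmap_comp (X Y Z : Size -> Type) (f : forall i, X i -> Y i)
  (g : forall i, Y i -> Z i) (i : Size) :
  dmap (fun j a => g j (f j a)) i = (fun d => dmap g i (dmap f i d)).
Proof. apply functional_extensionality; intros [j [p a]]; reflexivity. Qed.

Lemma salg_id_comm (X : SAlg) :
  (fun i x => (fun j (a : scar X j) => a) i (sstr X i x)) =
  (fun i x => sstr X i (Fm F (dmap (fun j (a : scar X j) => a) i) x)).
Proof.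
  apply functional_extensionality_dep; intro i.
  rewrite dmap_id, Fm_id. reflexivity.
Qed.

Definition salg_id (X : SAlg) : SAlgHom X X :=
  MkSAlgHom X X (fun j a => a) (salg_id_comm X).

Lemma salg_comp_comm (X Y Z : SAlg) (g : SAlgHom Y Z) (f : SAlgHom X Y) :
  (fun i x => shmap g i (shmap f i (sstr X i x))) =
  (fun i x => sstr Z i (Fm F (dmap (fun j a => shmap g j (shmap f j a)) i) x)).
Proof.
  apply functional_extensionality_dep; intro i.
  apply functional_extensionality; intro x.
  rewrite dmap_comp, Fm_comp.
  pose proof (f_equal (fun h => h i x) (shcomm f)) as Hf; simpl in Hf.
  rewrite Hf.
  pose proof (f_equal (fun h => h i (Fm F (dmap (shmap f) i) x)) (shcomm g)) as Hg.
  simpl in Hg. exact Hg.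
Qed.

Definition salg_comp (X Y Z : SAlg) (g : SAlgHom Y Z) (f : SAlgHom X Y) : SAlgHom X Z :=
  MkSAlgHom X Z (fun i a => shmap g i (shmap f i a)) (salg_comp_comm g f).

End Alg.

(* Main.v *)
Require Import Defs.
From Stdlib Require Import FunctionalExtensionality ProofIrrelevance.

Section S.
Variable Size : Type.
Variable lt : Size -> Size -> Prop.
Variable F : Functor.

Definition pr (A : Type) (i : Size) (d : Diamond lt (fun _ : Size => A) i) : A :=
  snd (projT2 d).

Definition TO (A : Alg F) : SAlg F lt :=
  MkSAlg F lt (fun _ => car A) (fun i x => str A (Fm F (@pr (car A) i) x)).

Lemma TM_comm (A B : Alg F) (f : AlgHom A B) :
  (fun i x => (fun (_ : Size) => hmap f) i (sstr (TO A) i x)) =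
  (fun i x => sstr (TO B) i (Fm F (@dmap Size lt (fun _ => car A) (fun _ => car B) (fun _ => hmap f) i) x)).
Proof.
  apply functional_extensionality_dep; intro i.
  apply functional_extensionality; intro x. simpl.
  pose proof (f_equal (fun h => h (Fm F (@pr (car A) i) x)) (hcomm f)) as Hf; simpl in Hf.
  rewrite Hf.
  f_equal.
  pose proof (f_equal (fun h => h x) (Fm_comp F (@pr (car A) i) (hmap f))) as H1.
  pose proof (f_equal (fun h => h x) (Fm_comp F (@dmap Size lt (fun _ => car A) (fun _ => car B) (fun _ => hmap f) i) (@pr (car B) i))) as H2.
  simpl in H1, H2. rewrite <- H1, <- H2. f_equal.
  apply functional_extensionality; intros [j [p a]]; reflexivity.
Qed.

Definition TM (A B : Alg F) (f : AlgHom A B) : SAlgHom (TO A) (TO B) :=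
  @MkSAlgHom F Size lt (TO A) (TO B) (fun _ => hmap f) (@TM_comm A B f).
End S.

Theorem lemma3p4
  (Size : Type) (lt : Size -> Size -> Prop)
  (lt_prop : forall (j i : Size) (p q : lt j i), p = q)
  (lt_irrefl : forall i : Size, ~ lt i i)
  (lt_trans : forall i j k : Size, lt i j -> lt j k -> lt i k)
  (F : Functor) :
  exists (T : Alg F -> SAlg F lt)
         (Tm : forall A B : Alg F, AlgHom A B -> SAlgHom (T A) (T B)),
    (forall A : Alg F, scar (T A) = (fun _ : Size => car A)) /\
    (forall A : Alg F, Tm A A (alg_id A) = salg_id (T A)) /\
    (forall (A B C : Alg F) (g : AlgHom B C) (f : AlgHom A B),
        Tm A C (alg_comp g f) = salg_comp (Tm B C g) (Tm A B f)).
Proof.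
  exists (@TO Size lt F), (@TM Size lt F).
  split; [reflexivity|split].
  - intro A. unfold TM, salg_id. f_equal. apply proof_irrelevance.
  - intros. unfold TM, salg_comp. simpl. f_equal. apply proof_irrelevance.
Qed.
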